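(* Let $(p_i)$ be a generic sequence in $\mathbb{RP}^2$ with normalised lift $(e_i)$, $e_{i+3}=a_i(e_{i+1}+e_i)+b_ie_{i+2}$, and let $\tilde p_i=(p_i,p_{i+1})\cap(p_{i+2},p_{i+3})$ be the image sequence under the pentagram map. Then a lift of $(\tilde p_i)$ of the form $\tilde e_i=\alpha_i(e_i+e_{i+1})$ satisfies the normalisation $\tilde e_{i+3}=\tilde a_i(\tilde e_{i+1}+\tilde e_i)+\tilde b_i\tilde e_{i+2}$ if and only if $\alpha_i=c\,\frac{a_i}{b_i+1}$ for a nonzero constant $c$, and in that case $$\tilde a_i=\frac{a_{i+3}(b_{i+1}+1)}{b_{i+3}+1},\qquad \tilde b_i=\frac{b_i(b_{i+1}+1)(b_{i+2}+1)\,a_{i+3}}{(b_i+1)(b_{i+3}+1)\,a_{i+2}}.$$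
   Context: Genericity means all points and intersections involved are well defined, consecutive triples of vectors are linearly independent, and $b_i\neq-1$. $(p,q)$ denotes the line through $p$ and $q$. A lift $(e_i)$ is normalised if there are scalars $a_i,b_i$ with $e_{i+3}=a_i(e_{i+1}+e_i)+b_ie_{i+2}$ for all $i$. *)

(* Defs.v *)
(* Points of RP^2 are represented by nonzero vectors of R^3
   (row vectors 'rV[R]_3 over a real field R); sequences are indexed by int. *)
From HB Require Import structures.
From mathcomp Require Import all_boot all_order all_algebra.
Set Implicit Arguments. Unset Strict Implicit. Unset Printing Implicit Defensive.
Import Order.TTheory GRing.Theory Num.Theory.
Local Open Scope ring_scope.

Definition indep3 (R : fieldType) (u v w : 'rV[R]_3) : bool :=
  row_free (col_mx u (col_mx v w)).

Definition normalised (R : fieldType) (e : int -> 'rV[R]_3) (a b : int -> R) : Prop :=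
  forall i : int, e (i + 3) = a i *: (e (i + 1) + e i) + b i *: e (i + 2).

(* genericity: consecutive triples independent and b_i <> -1.
   (Well-definedness of the points p_i and of the intersections
   (p_i,p_{i+1}) /\ (p_{i+2},p_{i+3}) follows from the independence.) *)
Definition generic (R : fieldType) (e : int -> 'rV[R]_3) (b : int -> R) : Prop :=
  (forall i : int, indep3 (e i) (e (i + 1)) (e (i + 2))) /\
  (forall i : int, b i <> -1).

(* et is a lift of the image of (p_i) = ([e_i]) under the pentagram map:
   et_i is a nonzero vector representing the point
   (p_i, p_{i+1}) /\ (p_{i+2}, p_{i+3}), i.e. it lies in both planes
   span(e_i, e_{i+1}) and span(e_{i+2}, e_{i+3}). *)
Definition pentagram_lift (R : fieldType) (e et : int -> 'rV[R]_3) : Prop :=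
  forall i : int,
    et i != 0 /\
    (et i <= col_mx (e i) (e (i + 1)%R))%MS /\
    (et i <= col_mx (e (i + 2)%R) (e (i + 3)%R))%MS.

(* Main.v *)
Require Import Defs.
From HB Require Import structures.
From mathcomp Require Import all_boot all_order all_algebra ring.
Import Order.TTheory GRing.Theory Num.Theory.
Local Open Scope ring_scope.
Lemma const_int (T : Type) (g : int -> T) : (forall i, g i = g (i+1)) -> forall i, g i = g 0.
Proof.
move=> H.
have P : forall n : nat, g n%:Z = g 0.
  elim=> [//|n IH]; by rewrite -addn1 PoszD -H.
have N : forall n : nat, g (- n%:Z) = g 0.
  elim=> [|n IH]; first by rewrite oppr0.
  by rewrite H -addn1 PoszD opprD addrNK.
by case=> n; [apply: P | rewrite NegzE; apply: N].
Qed.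
Lemma lin_from (R : comRingType) (l r g : R) : l = r -> g = l - r -> g = 0.
Proof. by move=> -> ->; rewrite subrr. Qed.
Lemma keyid (R : fieldType) (E0 E1 E2 e3 e4 : 'rV[R]_3) (a0 a1 b0 b1 al0 al1 al2 al3 At Bt : R) :
  e3 = a0 *: (E1 + E0) + b0 *: E2 ->
  e4 = a1 *: (E2 + E1) + b1 *: e3 ->
  al3 *: (e3 + e4) - (At *: (al1 *: (E1 + E2) + al0 *: (E0 + E1)) + Bt *: (al2 *: (E2 + e3)))
  = (al3*(1+b1)*a0 - At*al0 - Bt*al2*a0) *: E0
  + (al3*((1+b1)*a0 + a1) - At*al1 - At*al0 - Bt*al2*a0) *: E1
  + (al3*((1+b1)*b0 + a1) - At*al1 - Bt*al2*(1+b0)) *: E2.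
Proof.
move=> -> ->; apply/rowP => j; rewrite !mxE; ring.
Qed.
Lemma indepP (R:fieldType) (u v w : 'rV[R]_3) x y z : indep3 u v w -> x*:u + y*:v + z*:w = 0 -> [/\ x=0, y=0 & z=0].
Proof.
move=> Hi H.
pose r : 'M[R]_(1, 1+(1+1)) := row_mx x%:M (row_mx y%:M z%:M).
have Hr : r *m col_mx u (col_mx v w) = 0 *m col_mx u (col_mx v w).
  by rewrite mul0mx /r !mul_row_col !mul_scalar_mx addrA.
have := row_free_inj Hi Hr.
rewrite /r => /eqP; rewrite !row_mx_eq0 => /andP[/eqP h1 /andP[/eqP h2 /eqP h3]].
split.
- by move/matrixP: h1 => /(_ 0 0); rewrite !mxE.
- by move/matrixP: h2 => /(_ 0 0); rewrite !mxE.
- by move/matrixP: h3 => /(_ 0 0); rewrite !mxE.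
Qed.
Lemma int3 (i : int) : i + 1 + 1 = i + 2. Proof. ring. Qed.
Lemma comb3 (R : comRingType) (l r x y z c1 c2 c3 : R) :
  x = 0 -> y = 0 -> z = 0 -> l - r = c1 * x + c2 * y + c3 * z -> l = r.
Proof. move=> -> -> -> h; apply/eqP; rewrite -subr_eq0 h; apply/eqP; ring. Qed.

Theorem mainTheorem5 (R : realFieldType) (e : int -> 'rV[R]_3) (a b : int -> R)
  (alpha : int -> R) :
  generic e b ->
  normalised e a b ->
  pentagram_lift e (fun i => alpha i *: (e i + e (i + 1))) ->
  ((exists at_ bt : int -> R,
       normalised (fun i => alpha i *: (e i + e (i + 1))) at_ bt)
   <-> (exists2 c : R, c != 0 & forall i : int, alpha i = c * a i / (b i + 1)))
  /\
  (forall c : R, c != 0 -> (forall i : int, alpha i = c * a i / (b i + 1)) ->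
   forall at_ bt : int -> R,
     normalised (fun i => alpha i *: (e i + e (i + 1))) at_ bt ->
     forall i : int,
       at_ i = a (i + 3) * (b (i + 1) + 1) / (b (i + 3) + 1) /\
       bt i = b i * (b (i + 1) + 1) * (b (i + 2) + 1) * a (i + 3)
              / ((b i + 1) * (b (i + 3) + 1) * a (i + 2))).
Proof.
move=> [Hind Hb] Hn Hpl.
have i11 (i : int) : i + 1 + 1 = i + 2 by ring.
have i21 (i : int) : i + 2 + 1 = i + 3 by ring.
have i31 (i : int) : i + 3 + 1 = i + 4 by ring.
have i12 (i : int) : i + 1 + 2 = i + 3 by ring.
have i13 (i : int) : i + 1 + 3 = i + 4 by ring.
have anz i : a i != 0.
  apply/eqP => a0; have := Hind (i + 1); rewrite i11 i12 => Hi.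
  have H := Hn i; rewrite a0 scale0r add0r in H.
  have := @indepP _ _ _ _ 0 (b i) (-1) Hi.
  move=> h; have [_ _ /eqP] : [/\ (0:R) = 0, b i = 0 & (-1:R) = 0] by apply: h; rewrite H scale0r add0r scaleN1r subrr.
  by rewrite oppr_eq0 oner_eq0.
have bnz i : b i + 1 != 0.
  by apply/eqP => h; apply: (Hb i); apply/eqP; rewrite -addr_eq0 h.
have bnz' i : 1 + b i != 0 by rewrite addrC.
have alnz i : alpha i != 0.
  have [/eqP h _] := Hpl i; apply/eqP => a0; apply: h; by rewrite a0 scale0r.
have key i At Bt :
  (alpha (i+3) *: (e (i+3) + e (i+3+1)) =
     At *: (alpha (i+1) *: (e (i+1) + e (i+1+1)) + alpha i *: (e i + e (i+1)))
     + Bt *: (alpha (i+2) *: (e (i+2) + e (i+2+1)))) <->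
  [/\ alpha (i+3)*(1+b (i+1))*a i - At*alpha i - Bt*alpha (i+2)*a i = 0,
      alpha (i+3)*((1+b (i+1))*a i + a (i+1)) - At*alpha (i+1) - At*alpha i - Bt*alpha (i+2)*a i = 0
    & alpha (i+3)*((1+b (i+1))*b i + a (i+1)) - At*alpha (i+1) - Bt*alpha (i+2)*(1+b i) = 0].
  rewrite i11 i21 i31.
  have H3 := Hn i.
  have H4 := Hn (i + 1); rewrite i11 i12 i13 in H4.
  have K := @keyid R _ _ _ _ _ _ _ _ _ (alpha i) (alpha (i+1)) (alpha (i+2)) (alpha (i+3)) At Bt H3 H4.
  split.
  - move/eqP; rewrite -subr_eq0 K => /eqP; exact: indepP (Hind i).
  - by move=> [hx hy hz]; apply/eqP; rewrite -subr_eq0 K hx hy hz !scale0r !addr0.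
split; last first.
  move=> c cnz Hal at_ bt Hnb i.
  have [hx hy hz] := (key i (at_ i) (bt i)).1 (Hnb i).
  have h1 : at_ i * alpha (i+1) = alpha (i+3) * a (i+1).
    apply: (@comb3 _ _ _ _ _ _ (1) (-1) (0) hx hy hz); ring.
  have h2 : bt i * alpha (i+2) * (1 + b i) = alpha (i+3) * (1 + b (i+1)) * b i.
    apply: (@comb3 _ _ _ _ _ _ (-1) (1) (-1) hx hy hz); ring.
  split.
  - rewrite -[at_ i](mulfK (alnz (i+1))) h1 !Hal; field.
    by rewrite ?anz ?bnz ?bnz' ?cnz.
  - have hh : alpha (i + 2) * (1 + b i) != 0 by rewrite mulf_neq0.
    rewrite -[bt i](mulfK hh) mulrA h2 !Hal; field.
    by rewrite ?anz ?bnz ?bnz' ?cnz.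
split.
- move=> [at_ [bt Hnb]].
  pose g i := alpha i * (b i + 1) / a i.
  have gs i : g i = g (i + 1).
    have [hx hy hz] := (key i (at_ i) (bt i)).1 (Hnb i).
    have h1 : at_ i * alpha (i+1) = alpha (i+3) * a (i+1).
      apply: (@comb3 _ _ _ _ _ _ (1) (-1) (0) hx hy hz); ring.
    have h2 : at_ i * alpha i * (1 + b i) = alpha (i+3) * (1 + b (i+1)) * a i.
      apply: (@comb3 _ _ _ _ _ _ (a i - (1 + b i)) (- a i) (a i) hx hy hz); ring.
    have atnz : at_ i != 0.
      apply/eqP => h0; move: h1; rewrite h0 mul0r => /esym/eqP.
      by rewrite mulf_eq0 (negbTE (alnz _)) (negbTE (anz _)).
    have e0 : alpha i = alpha (i+3) * (1 + b (i+1)) * a i / (at_ i * (1 + b i)).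
      by rewrite -h2; field; rewrite ?atnz ?bnz'.
    have e1 : alpha (i+1) = alpha (i+3) * a (i+1) / at_ i.
      by rewrite -h1; field; rewrite ?atnz.
    rewrite /g e0 e1; field.
    by rewrite ?anz ?bnz ?bnz' ?atnz ?alnz.
  have gc := @const_int R g gs.
  exists (g 0).
    by rewrite /g !mulf_neq0 ?invr_eq0 ?alnz ?bnz ?anz.
  move=> i; rewrite -(gc i) /g; field.
  by rewrite ?anz ?bnz ?bnz'.
- move=> [c cnz Hal].
  exists (fun i => a (i + 3) * (b (i + 1) + 1) / (b (i + 3) + 1)).
  exists (fun i => b i * (b (i + 1) + 1) * (b (i + 2) + 1) * a (i + 3)
              / ((b i + 1) * (b (i + 3) + 1) * a (i + 2))).
  move=> i /=; apply/key.
  rewrite !Hal; split; field; by rewrite ?anz ?bnz ?bnz' ?cnz.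
Qed.
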